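(* Let $\mathcal{L}_\land\subseteq\{\land,\lor,\to,\lnot,0,1\}$ be a language containing $\land$ and $\Phi$ a Sahlqvist quasiequation in $\mathcal{L}_\land$. For every $\mathcal{L}_\land$-subreduct $\boldsymbol{A}$ of a Heyting algebra, $\boldsymbol{A}\vDash\Phi$ if and only if $\boldsymbol{A}_\ast\vDash\mathsf{tr}(\Phi)$.
   Context: Formulas over variables with $\land,\lor,\to,\lnot,0,1$. An occurrence of a variable is positive (negative) if the number of negations and antecedents of implications in whose scope it lies is even (odd); a formula is positive (negative) if all its variable occurrences are. A Sahlqvist antecedent is built from variables, negative formulas and $0,1$ using only $\land,\lor$. A Sahlqvist implication is a positive formula, or $\lnot\varphi$ with $\varphi$ a Sahlqvist antecedent, or $\varphi\to\psi$ with $\varphi$ a Sahlqvist antecedent and $\psi$ positive. A Sahlqvist quasiequation is $\varphi_1\land y\le z\,\&\cdots\&\,\varphi_n\land y\le z\Longrightarrow y\le z$ (universally quantified), with $y,z$ distinct variables not in the $\varphi_i$, each $\varphi_i$ built from Sahlqvist implications using only $\land,\lor$, and $a\le b$ meaning $a\land b\approx a$; it is in $\mathcal{L}_\land$ if all symbols of the $\varphi_i$ lie in $\mathcal{L}_\land$. For a poset $\mathbb{X}$, $\mathsf{Up}(\mathbb{X})$ is the Heyting algebra of upsets $\langle\mathsf{Up}(\mathbb{X});\cap,\cup,\to,\emptyset,X\rangle$ with $U\to V=X\smallsetminus{\downarrow}(U\smallsetminus V)$. For each Sahlqvist quasiequation $\Phi$, $\mathsf{tr}(\Phi)$ is the effectively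 computable first-order sentence in the language of posets (the Sahlqvist correspondent of the Gödel–McKinsey–Tarski translation of $\Phi$) satisfying, for every poset $\mathbb{X}$: $\mathsf{Up}(\mathbb{X})\vDash\Phi$ iff $\mathbb{X}\vDash\mathsf{tr}(\Phi)$. An $\mathcal{L}_\land$-subreduct of a Heyting algebra is a subalgebra of its $\mathcal{L}_\land$-reduct; for it, $\boldsymbol{A}_\ast$ is the poset (under inclusion) of meet irreducible filters, where a filter is a nonempty upset (w.r.t. $a\le b\iff a\land b=a$) closed under $\land$, meet irreducible if proper and not the intersection of two filters both different from it. *)

(* Defs.v *)
From Stdlib Require Import List Bool FunctionalExtensionality
  PropExtensionality ProofIrrelevance.
Import ListNotations.

Inductive fm : Type :=
| Var : nat -> fm
| And : fm -> fm -> fm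
| Or  : fm -> fm -> fm
| Imp : fm -> fm -> fm
| Not : fm -> fm
| Bot : fm
| Top : fm.

Inductive conn : Type := cAnd | cOr | cImp | cNot | c0 | c1.

Fixpoint in_lang (L : conn -> bool) (f : fm) : bool :=
  match f with
  | Var _ => true
  | And a b => L cAnd && in_lang L a && in_lang L b
  | Or a b => L cOr && in_lang L a && in_lang L b
  | Imp a b => L cImp && in_lang L a && in_lang L b
  | Not a => L cNot && in_lang L a
  | Bot => L c0
  | Top => L c1
  end.

Fixpoint occurs (n : nat) (f : fm) : bool :=
  match f with
  | Var m => Nat.eqb n m
  | And a b | Or a b | Imp a b => occurs n a || occurs n b
  | Not a => occurs n a
  | Bot | Top => false
  end.

Fixpoint positive (f : fm) : bool :=
  match f with
  | Var _ => true
  | And a b | Or a b => positive a && positive b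
  | Imp a b => negative a && positive b
  | Not a => negative a
  | Bot | Top => true
  end
with negative (f : fm) : bool :=
  match f with
  | Var _ => false
  | And a b | Or a b => negative a && negative b
  | Imp a b => positive a && negative b
  | Not a => positive a
  | Bot | Top => true
  end.

Inductive sahl_ante : fm -> Prop :=
| sa_var n : sahl_ante (Var n)
| sa_negative f : negative f = true -> sahl_ante f
| sa_bot : sahl_ante Bot
| sa_top : sahl_ante Top
| sa_and a b : sahl_ante a -> sahl_ante b -> sahl_ante (And a b)
| sa_or a b : sahl_ante a -> sahl_ante b -> sahl_ante (Or a b).

Definition sahl_impl (f : fm) : Prop :=
  positive f = true \/
  (exists a, f = Not a /\ sahl_ante a) \/
  (exists a b, f = Imp a b /\ sahl_ante a /\ positive b = true).

Inductive sahl_body : fm -> Prop :=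
| sb_impl f : sahl_impl f -> sahl_body f
| sb_and a b : sahl_body a -> sahl_body b -> sahl_body (And a b)
| sb_or a b : sahl_body a -> sahl_body b -> sahl_body (Or a b).

(* The Sahlqvist quasiequation
     phi_1 /\ y <= z & ... & phi_n /\ y <= z  ==>  y <= z
   is represented by the data (phis, y, z) with phis = [phi_1; ...; phi_n]. *)
Definition sahlqvist_qe (phis : list fm) (y z : nat) : Prop :=
  0 < length phis /\ y <> z /\
  (forall f, In f phis -> occurs y f = false /\ occurs z f = false) /\
  (forall f, In f phis -> sahl_body f).

Definition qe_in_lang (L : conn -> bool) (phis : list fm) : Prop :=
  forall f, In f phis -> in_lang L f = true.

Fixpoint evalf {T : Type} (mt jn im : T -> T -> T) (ng : T -> T) (b t : T)
  (v : nat -> T) (f : fm) : T :=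
  match f with
  | Var n => v n
  | And a c => mt (evalf mt jn im ng b t v a) (evalf mt jn im ng b t v c)
  | Or a c => jn (evalf mt jn im ng b t v a) (evalf mt jn im ng b t v c)
  | Imp a c => im (evalf mt jn im ng b t v a) (evalf mt jn im ng b t v c)
  | Not a => ng (evalf mt jn im ng b t v a)
  | Bot => b
  | Top => t
  end.

Record HA : Type := {
  hcar :> Type;
  hmeet : hcar -> hcar -> hcar;
  hjoin : hcar -> hcar -> hcar;
  himp : hcar -> hcar -> hcar;
  hneg : hcar -> hcar;
  hbot : hcar;
  htop : hcar;
  hmeetC : forall a b, hmeet a b = hmeet b a;
  hmeetA : forall a b c, hmeet a (hmeet b c) = hmeet (hmeet a b) c;
  hjoinC : forall a b, hjoin a b = hjoin b a;
  hjoinA : forall a b c, hjoin a (hjoin b c) = hjoin (hjoin a b) c;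
  hmeet_join : forall a b, hmeet a (hjoin a b) = a;
  hjoin_meet : forall a b, hjoin a (hmeet a b) = a;
  hmeet_top : forall a, hmeet a htop = a;
  hjoin_bot : forall a, hjoin a hbot = a;
  himpP : forall a b c, hmeet (hmeet c a) b = hmeet c a <-> hmeet c (himp a b) = c;
  hnegE : forall a, hneg a = himp a hbot
}.

Definition hle (H : HA) (a b : H) : Prop := hmeet H a b = a.

Definition evalH (H : HA) (v : nat -> H) (f : fm) : H :=
  evalf (hmeet H) (hjoin H) (himp H) (hneg H) (hbot H) (htop H) v f.

(* S is (the universe of) a subalgebra of the L-reduct of H *)
Definition subreduct (L : conn -> bool) (H : HA) (S : H -> Prop) : Prop :=
  (exists a, S a) /\
  (L cAnd = true -> forall a b, S a -> S b -> S (hmeet H a b)) /\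
  (L cOr = true -> forall a b, S a -> S b -> S (hjoin H a b)) /\
  (L cImp = true -> forall a b, S a -> S b -> S (himp H a b)) /\
  (L cNot = true -> forall a, S a -> S (hneg H a)) /\
  (L c0 = true -> S (hbot H)) /\
  (L c1 = true -> S (htop H)).

(* A |= Phi, for A the L-subreduct with universe S (the operations of A are
   the restrictions of those of H, so evaluation can be done in H) *)
Definition alg_sat (H : HA) (S : H -> Prop) (phis : list fm) (y z : nat) : Prop :=
  forall v : nat -> H, (forall n, S (v n)) ->
    (forall f, In f phis -> hle H (hmeet H (evalH H v f) (v y)) (v z)) ->
    hle H (v y) (v z).

Record Poset : Type := {
  pcar :> Type;
  ple : pcar -> pcar -> Prop;
  ple_refl : forall x, ple x x;
  ple_antisym : forall x y, ple x y -> ple y x -> x = y;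
  ple_trans : forall x y z, ple x y -> ple y z -> ple x z
}.

Definition is_upset (X : Poset) (U : X -> Prop) : Prop :=
  forall x y, ple X x y -> U x -> U y.

Definition up_meet (X : Poset) (U V : X -> Prop) : X -> Prop := fun x => U x /\ V x.
Definition up_join (X : Poset) (U V : X -> Prop) : X -> Prop := fun x => U x \/ V x.
Definition up_imp (X : Poset) (U V : X -> Prop) : X -> Prop :=
  fun x => ~ exists y, ple X x y /\ U y /\ ~ V y.
Definition up_bot (X : Poset) : X -> Prop := fun _ => False.
Definition up_top (X : Poset) : X -> Prop := fun _ => True.
Definition up_neg (X : Poset) (U : X -> Prop) : X -> Prop := up_imp X U (up_bot X).

Definition evalUp (X : Poset) (v : nat -> X -> Prop) (f : fm) : X -> Prop :=
  evalf (up_meet X) (up_join X) (up_imp X) (up_neg X) (up_bot X) (up_top X) v f.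

(* Up(X) |= Phi  (U <= V in Up(X), i.e. U /\ V = U, is inclusion) *)
Definition up_sat (X : Poset) (phis : list fm) (y z : nat) : Prop :=
  forall v : nat -> X -> Prop, (forall n, is_upset X (v n)) ->
    (forall f, In f phis -> forall x, up_meet X (evalUp X v f) (v y) x -> v z x) ->
    forall x, v y x -> v z x.

Inductive fo : Type :=
| FLe : nat -> nat -> fo
| FEq : nat -> nat -> fo
| FFalse : fo
| FNot : fo -> fo
| FAnd : fo -> fo -> fo
| FOr : fo -> fo -> fo
| FImp : fo -> fo -> fo
| FAll : nat -> fo -> fo
| FEx : nat -> fo -> fo.

Definition upd {T : Type} (e : nat -> T) (n : nat) (x : T) : nat -> T :=
  fun m => if Nat.eqb m n then x else e m.

Fixpoint fo_eval (X : Poset) (e : nat -> X) (p : fo) : Prop :=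
  match p with
  | FLe i j => ple X (e i) (e j)
  | FEq i j => e i = e j
  | FFalse => False
  | FNot a => ~ fo_eval X e a
  | FAnd a b => fo_eval X e a /\ fo_eval X e b
  | FOr a b => fo_eval X e a \/ fo_eval X e b
  | FImp a b => fo_eval X e a -> fo_eval X e b
  | FAll n a => forall x : X, fo_eval X (upd e n x) a
  | FEx n a => exists x : X, fo_eval X (upd e n x) a
  end.

Fixpoint fo_free (n : nat) (p : fo) : bool :=
  match p with
  | FLe i j | FEq i j => Nat.eqb n i || Nat.eqb n j
  | FFalse => false
  | FNot a => fo_free n a
  | FAnd a b | FOr a b | FImp a b => fo_free n a || fo_free n b
  | FAll m a | FEx m a => negb (Nat.eqb n m) && fo_free n a
  end.

Definition fo_sentence (p : fo) : Prop := forall n, fo_free n p = false.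

Definition fo_sat (X : Poset) (p : fo) : Prop := forall e : nat -> X, fo_eval X e p.

Definition set_eq {T : Type} (F G : T -> Prop) : Prop := forall a, F a <-> G a.

Definition is_filter (H : HA) (S : H -> Prop) (F : H -> Prop) : Prop :=
  (forall a, F a -> S a) /\
  (exists a, F a) /\
  (forall a b, F a -> S b -> hle H a b -> F b) /\
  (forall a b, F a -> F b -> F (hmeet H a b)).

Definition meet_irreducible (H : HA) (S : H -> Prop) (F : H -> Prop) : Prop :=
  is_filter H S F /\
  (exists a, S a /\ ~ F a) /\
  ~ (exists G1 G2, is_filter H S G1 /\ is_filter H S G2 /\
       ~ set_eq G1 F /\ ~ set_eq G2 F /\
       set_eq F (fun a => G1 a /\ G2 a)).

Definition mif (H : HA) (S : H -> Prop) : Type :=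
  { F : H -> Prop | meet_irreducible H S F }.

Definition mif_le (H : HA) (S : H -> Prop) (F G : mif H S) : Prop :=
  forall a, proj1_sig F a -> proj1_sig G a.

Lemma mif_le_refl H S (F : mif H S) : mif_le H S F F.
Proof. intros a h; exact h. Qed.

Lemma mif_le_trans H S (F G K : mif H S) :
  mif_le H S F G -> mif_le H S G K -> mif_le H S F K.
Proof. intros h1 h2 a h; apply h2, h1, h. Qed.

Lemma mif_le_antisym H S (F G : mif H S) :
  mif_le H S F G -> mif_le H S G F -> F = G.
Proof.
  destruct F as [F hF], G as [G hG]; simpl; unfold mif_le; simpl; intros h1 h2.
  assert (F = G) as ->.
  { apply functional_extensionality; intro a;
    apply propositional_extensionality; split; auto. }
  f_equal; apply proof_irrelevance.
Qed.

Definition dual_poset (H : HA) (S : H -> Prop) : Poset :=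
  {| pcar := mif H S; ple := mif_le H S;
     ple_refl := mif_le_refl H S;
     ple_antisym := mif_le_antisym H S;
     ple_trans := mif_le_trans H S |}.

(* Main.v *)
Require Import Defs.
From Stdlib Require Import List Bool Classical PeanoNat.
From mathcomp Require classical_sets boolp.
Import ListNotations.


Section HAfacts.
Variable H : HA.
Notation mt := (hmeet H).
Notation jn := (hjoin H).
Notation im := (himp H).
Notation le := (hle H).

Lemma mt_idem a : mt a a = a.
Proof.
  assert (E : mt a (jn a (mt a a)) = a) by apply hmeet_join.
  rewrite hjoin_meet in E. exact E.
Qed.

Lemma le_refl a : le a a.
Proof. apply mt_idem. Qed.

Lemma le_join a b : le a b <-> jn a b = b.
Proof.
  unfold hle; split; intro h.
  - rewrite <- h. rewrite hjoinC, hmeetC. apply hjoin_meet.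
  - rewrite <- h. apply hmeet_join.
Qed.

Lemma le_trans a b c : le a b -> le b c -> le a c.
Proof.
  unfold hle; intros h1 h2. rewrite <- h1. rewrite <- hmeetA. rewrite h2. reflexivity.
Qed.

Lemma le_antisym a b : le a b -> le b a -> a = b.
Proof. unfold hle; intros h1 h2. rewrite <- h1. rewrite hmeetC. exact h2. Qed.

Lemma le_mt_l a b : le (mt a b) a.
Proof.
  unfold hle. rewrite (hmeetC _ a b). rewrite <- hmeetA. rewrite mt_idem. reflexivity.
Qed.

Lemma le_mt_r a b : le (mt a b) b.
Proof. rewrite hmeetC. apply le_mt_l. Qed.

Lemma le_mt_glb a b c : le c a -> le c b -> le c (mt a b).
Proof. unfold hle; intros h1 h2. rewrite hmeetA. rewrite h1. exact h2. Qed.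

Lemma le_jn_l a b : le a (jn a b).
Proof. apply hmeet_join. Qed.

Lemma le_jn_r a b : le b (jn a b).
Proof. rewrite hjoinC. apply le_jn_l. Qed.

Lemma le_jn_lub a b c : le a c -> le b c -> le (jn a b) c.
Proof.
  intros h1 h2. apply le_join. apply le_join in h1. apply le_join in h2.
  rewrite <- hjoinA. rewrite h2. exact h1.
Qed.

Lemma le_mt_mono a b c d : le a c -> le b d -> le (mt a b) (mt c d).
Proof.
  intros h1 h2. apply le_mt_glb.
  - eapply le_trans; [apply le_mt_l|exact h1].
  - eapply le_trans; [apply le_mt_r|exact h2].
Qed.

Lemma le_jn_mono a b c d : le a c -> le b d -> le (jn a b) (jn c d).
Proof.
  intros h1 h2. apply le_jn_lub.
  - eapply le_trans; [exact h1|apply le_jn_l].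
  - eapply le_trans; [exact h2|apply le_jn_r].
Qed.

Lemma imp_adj c a b : le (mt c a) b <-> le c (im a b).
Proof. apply himpP. Qed.

Lemma imp_mp a b : le (mt a (im a b)) b.
Proof.
  rewrite hmeetC. apply imp_adj. apply le_refl.
Qed.

Lemma le_bot a : le (hbot H) a.
Proof.
  apply le_join. rewrite hjoinC. apply hjoin_bot.
Qed.

Lemma le_top a : le a (htop H).
Proof. apply hmeet_top. Qed.

Lemma distr a b f : le (mt (jn a b) f) (jn (mt a f) (mt b f)).
Proof.
  apply imp_adj. apply le_jn_lub; apply imp_adj.
  - apply le_jn_l.
  - apply le_jn_r.
Qed.

Lemma imp_mono a b c d : le c a -> le b d -> le (im a b) (im c d).
Proof.
  intros h1 h2. apply imp_adj.
  eapply le_trans; [|exact h2].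
  eapply le_trans; [|apply (imp_mp a b)].
  rewrite hmeetC. apply le_mt_mono; [exact h1|apply le_refl].
Qed.

Lemma neg_mono a c : le c a -> le (hneg H a) (hneg H c).
Proof.
  intro h. rewrite !hnegE. apply imp_mono; [exact h|apply le_refl].
Qed.

Lemma neg_mp a : le (mt a (hneg H a)) (hbot H).
Proof. rewrite hnegE. apply imp_mp. Qed.

End HAfacts.


Lemma ab_in (P : Prop) : P -> boolp.asbool P = true.
Proof. intro h. apply (proj1 (Bool.reflect_iff _ _ (boolp.asboolP P))); exact h. Qed.
Lemma ab_out (P : Prop) : boolp.asbool P = true -> P.
Proof. intro h. apply (proj2 (Bool.reflect_iff _ _ (boolp.asboolP P))); exact h. Qed.
Lemma zorn_prop (T:Type) (R: T->T->Prop) (t0:T) :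
  (forall t, R t t) -> (forall r s t, R r s -> R s t -> R r t) ->
  (forall A : T -> Prop, (forall s t, A s -> A t -> R s t \/ R t s) -> exists t, forall s, A s -> R s t) ->
  exists t, forall s, R t s -> R s t.
Proof.
intros Hr Ht Hc.
destruct (@classical_sets.ZL_preorder T t0 (fun s t => boolp.asbool (R s t))) as [t Ht0].
- intro t; apply ab_in; apply Hr.
- intros r s t H1 H2; apply ab_in; eapply Ht; [apply ab_out; exact H1|apply ab_out; exact H2].
- intros A HA. destruct (Hc A) as [t Hx].
  + intros s u As Au. destruct (HA s u As Au) as [h|h]; [left|right]; apply ab_out; exact h.
  + exists t; intros s As; apply ab_in; apply Hx; exact As.
- exists t. intros s Rts. apply ab_out. apply Ht0. apply ab_in. exact Rts.
Qed.

Section Filters.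
Variable H : HA.
Variable S : H -> Prop.
Notation mt := (hmeet H).
Notation jn := (hjoin H).
Notation im := (himp H).
Notation le := (hle H).
Variable Smt : forall a b, S a -> S b -> S (mt a b).

Definition gen (F : H -> Prop) (a : H) : H -> Prop :=
  fun c => S c /\ exists f, F f /\ le (mt f a) c.

Lemma filt_S F a : is_filter H S F -> F a -> S a.
Proof. intros [h _] x; apply h, x. Qed.

Lemma filt_up F a b : is_filter H S F -> F a -> S b -> le a b -> F b.
Proof. intros [_ [_ [h _]]] x y z; eapply h; eauto. Qed.

Lemma filt_mt F a b : is_filter H S F -> F a -> F b -> F (mt a b).
Proof. intros [_ [_ [_ h]]] x y; apply h; auto. Qed.

Lemma filt_ne F : is_filter H S F -> exists a, F a.
Proof. intros [_ [h _]]; exact h. Qed.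

Lemma gen_filter F a : is_filter H S F -> S a -> is_filter H S (gen F a).
Proof.
  intros hF hSa. split; [|split; [|split]].
  - intros c [h _]; exact h.
  - destruct (filt_ne F hF) as [f hf]. exists a. split; [exact hSa|].
    exists f; split; [exact hf|apply le_mt_r].
  - intros b c [hb [f [hf hle]]] hSc hbc. split; [exact hSc|].
    exists f; split; [exact hf|eapply le_trans; eauto].
  - intros b c [hb [f [hf h1]]] [hc [g [hg h2]]]. split.
    + apply Smt; auto.
    + exists (mt f g). split; [apply filt_mt; auto|].
      apply le_mt_glb.
      * eapply le_trans; [|exact h1]. apply le_mt_mono; [apply le_mt_l|apply le_refl].
      * eapply le_trans; [|exact h2]. apply le_mt_mono; [apply le_mt_r|apply le_refl].
Qed.

Lemma gen_in F a c : is_filter H S F -> F c -> gen F a c.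
Proof.
  intros hF hc. split; [eapply filt_S; eauto|]. exists c; split; [exact hc|apply le_mt_l].
Qed.

Lemma gen_a F a : is_filter H S F -> S a -> gen F a a.
Proof.
  intros hF hSa. split; [exact hSa|]. destruct (filt_ne F hF) as [f hf].
  exists f; split; [exact hf|apply le_mt_r].
Qed.

Lemma pt_filter G : meet_irreducible H S G -> is_filter H S G.
Proof. intros [h _]; exact h. Qed.

Lemma pt_proper G : meet_irreducible H S G -> exists a, S a /\ ~ G a.
Proof. intros [_ [h _]]; exact h. Qed.

Lemma pt_nolow G c : meet_irreducible H S G -> (forall s, S s -> le c s) -> ~ G c.
Proof.
  intros hG hc hGc. destruct (pt_proper G hG) as [a [hSa hna]].
  apply hna. eapply filt_up; eauto using pt_filter.
Qed.

Lemma ML G c1 c2 : meet_irreducible H S G -> S c1 -> S c2 -> ~ G c1 -> ~ G c2 ->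
  exists f z, G f /\ S z /\ ~ G z /\ le (mt c1 f) z /\ le (mt c2 f) z.
Proof.
  intros hG h1 h2 n1 n2. apply NNPP; intro Hno.
  destruct hG as [hF [_ Hirr]]. apply Hirr.
  exists (gen G c1), (gen G c2).
  split; [apply gen_filter; auto|]. split; [apply gen_filter; auto|].
  split; [intro e; apply n1, e, gen_a; auto|].
  split; [intro e; apply n2, e, gen_a; auto|].
  intro a; split.
  - intro ha; split; apply gen_in; auto.
  - intros [[hSa [f1 [hf1 l1]]] [_ [f2 [hf2 l2]]]].
    apply NNPP; intro hna. apply Hno. exists (mt f1 f2), a.
    split; [apply filt_mt; auto|]. split; [exact hSa|]. split; [exact hna|]. split.
    + eapply le_trans; [|exact l1]. rewrite (hmeetC _ c1). apply le_mt_mono; [apply le_mt_l|apply le_refl].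
    + eapply le_trans; [|exact l2]. rewrite (hmeetC _ c2). apply le_mt_mono; [apply le_mt_r|apply le_refl].
Qed.

Lemma ML_list G cs : meet_irreducible H S G -> (forall c, In c cs -> S c /\ ~ G c) ->
  exists f z, G f /\ S z /\ ~ G z /\ forall c, In c cs -> le (mt c f) z.
Proof.
  intros hG. induction cs as [|c cs IH]; intros hcs.
  - destruct (filt_ne G (pt_filter G hG)) as [f hf].
    destruct (pt_proper G hG) as [z [hz nz]].
    exists f, z. repeat split; auto. intros c [].
  - destruct IH as [f1 [z1 [hf1 [hz1 [nz1 hle1]]]]].
    { intros d hd; apply hcs; right; exact hd. }
    destruct (hcs c (or_introl eq_refl)) as [hc nc].
    destruct (ML G c z1 hG hc hz1 nc nz1) as [f2 [z [hf2 [hz [nz [l1 l2]]]]]].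
    exists (mt f1 f2), z. split; [apply filt_mt; auto using pt_filter|].
    split; [exact hz|]. split; [exact nz|].
    intros d [<-|hd].
    + eapply le_trans; [|exact l1]. apply le_mt_mono; [apply le_refl|apply le_mt_r].
    + eapply le_trans; [|exact l2]. eapply le_trans; [|apply le_mt_mono; [exact (hle1 d hd)|apply le_refl]].
      rewrite hmeetA. apply le_refl.
Qed.

Definition extT (K D : H -> Prop) :=
  { F : H -> Prop | is_filter H S F /\ (forall a, K a -> F a) /\ (forall d, D d -> ~ F d) }.

Lemma extend (K D : H -> Prop) : is_filter H S K -> (exists d, D d) -> (forall d, D d -> S d) ->
  (forall d1 d2, D d1 -> D d2 -> exists d, D d /\ le d1 d /\ le d2 d) ->
  (forall d, D d -> ~ K d) ->
  exists G, meet_irreducible H S G /\ (forall a, K a -> G a) /\ (forall d, D d -> ~ G d).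
Proof.
  intros hK hDne hDS hDdir hKD.
  pose (t0 := exist (fun F => is_filter H S F /\ (forall a, K a -> F a) /\ (forall d, D d -> ~ F d))
                K (conj hK (conj (fun a h => h) hKD)) : extT K D).
  destruct (zorn_prop (extT K D) (fun F G => forall a, proj1_sig F a -> proj1_sig G a) t0)
    as [[M [hM [hKM hMD]]] Hmax].
  - intros t a h; exact h.
  - intros r s t h1 h2 a h; apply h2, h1, h.
  - intros A hA.
    pose (U := fun a => K a \/ exists F : extT K D, A F /\ proj1_sig F a).
    assert (hU : is_filter H S U /\ (forall a, K a -> U a) /\ (forall d, D d -> ~ U d)).
    { split; [|split].
      - split; [|split; [|split]].
        + intros a [h|[F [hAF h]]]; [eapply filt_S; eauto|destruct F as [F0 [hF hFF]]; simpl in h; eapply filt_S; eauto].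
        + destruct (filt_ne K hK) as [a ha]; exists a; left; exact ha.
        + intros a b [h|[F [hAF h]]] hSb hab.
          * left; eapply filt_up; eauto.
          * right; exists F; split; [exact hAF|]. destruct F as [F0 [hF hFx]]; simpl in *.
            eapply filt_up; eauto.
        + intros a b [ha|[F [hAF ha]]] [hb|[G [hAG hb]]].
          * left; apply filt_mt; auto.
          * right; exists G; split; [exact hAG|]. destruct G as [G0 [hG [hKG hGx]]]; simpl in *.
            apply filt_mt; auto.
          * right; exists F; split; [exact hAF|]. destruct F as [F0 [hF [hKF hFx]]]; simpl in *.
            apply filt_mt; auto.
          * right. destruct (hA F G hAF hAG) as [c|c].
            -- exists G; split; [exact hAG|]. destruct G as [G0 [hG hGx]]; simpl in *.
               apply filt_mt; auto.
            -- exists F; split; [exact hAF|]. destruct F as [F0 [hF hFx]]; simpl in *.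
               apply filt_mt; auto.
      - intros a h; left; exact h.
      - intros d hd [h|[F [hAF h]]]; [eapply hKD; eauto|destruct F as [F0 [hF1 [hF2 hFD]]]; simpl in h; eapply hFD; eauto]. }
    exists (exist _ U hU). intros s hs a h. simpl. right. exists s; split; auto.
  - exists M. split; [|split; [exact hKM|exact hMD]].
    split; [exact hM|]. split.
    + destruct hDne as [d hd]. exists d; split; [apply hDS; exact hd|apply hMD; exact hd].
    + intros [G1 [G2 [g1 [g2 [n1 [n2 e]]]]]].
      assert (Hd : forall G, is_filter H S G -> ~ set_eq G M -> (forall a, M a -> G a) ->
                 exists d, D d /\ G d).
      { intros G hG nG hMG. apply NNPP; intro hno.
        assert (hGT : is_filter H S G /\ (forall a, K a -> G a) /\ (forall d, D d -> ~ G d)).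
        { split; [exact hG|]. split; [intros a ha; apply hMG, hKM, ha|].
          intros d hd hGd; apply hno; exists d; split; auto. }
        specialize (Hmax (exist _ G hGT)). simpl in Hmax.
        apply nG. intro a; split; [apply Hmax; exact hMG|apply hMG]. }
      destruct (Hd G1 g1 n1) as [d1 [hd1 hG1]]. { intros a ha; apply (proj1 (e a) ha). }
      destruct (Hd G2 g2 n2) as [d2 [hd2 hG2]]. { intros a ha; apply (proj1 (e a) ha). }
      destruct (hDdir d1 d2 hd1 hd2) as [d [hd [l1 l2]]].
      apply (hMD d hd). apply (proj2 (e d)). split.
      * eapply filt_up; [exact g1|exact hG1|apply hDS; exact hd|exact l1].
      * eapply filt_up; [exact g2|exact hG2|apply hDS; exact hd|exact l2].
Qed.

Lemma extend1 K d : is_filter H S K -> S d -> ~ K d ->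
  exists G, meet_irreducible H S G /\ (forall a, K a -> G a) /\ ~ G d.
Proof.
  intros hK hd nd.
  destruct (extend K (fun x => x = d) hK) as [G [hG [hKG hGD]]].
  - exists d; reflexivity.
  - intros x ->; exact hd.
  - intros x y -> ->; exists d; split; [reflexivity|split; apply le_refl].
  - intros x -> ; exact nd.
  - exists G; split; [exact hG|split; [exact hKG|apply hGD; reflexivity]].
Qed.

Lemma separate a b : S a -> S b -> ~ le a b ->
  exists G, meet_irreducible H S G /\ G a /\ ~ G b.
Proof.
  intros ha hb nab.
  assert (hK : is_filter H S (fun c => S c /\ le a c)).
  { split; [|split; [|split]].
    - intros c [h _]; exact h.
    - exists a; split; [exact ha|apply le_refl].
    - intros c d [_ h] hd hcd; split; [exact hd|eapply le_trans; eauto].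
    - intros c d [hc h1] [hd h2]; split; [apply Smt; auto|apply le_mt_glb; auto]. }
  destruct (extend1 _ b hK hb) as [G [hG [hKG nG]]].
  - intros [_ h]; exact (nab h).
  - exists G; split; [exact hG|split; [apply hKG; split; [exact ha|apply le_refl]|exact nG]].
Qed.

Lemma prime_pt G a b : meet_irreducible H S G -> S a -> S b -> S (jn a b) -> G (jn a b) -> G a \/ G b.
Proof.
  intros hG ha hb hab hj. apply NNPP; intro hn.
  destruct (ML G a b hG ha hb) as [f [z [hf [hz [nz [l1 l2]]]]]];
    [intro h; apply hn; left; exact h|intro h; apply hn; right; exact h|].
  apply nz. apply (filt_up G (mt (jn a b) f) z); [apply pt_filter; exact hG| |exact hz|].
  - apply filt_mt; [apply pt_filter; exact hG|exact hj|exact hf].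
  - eapply le_trans; [apply distr|]. apply le_jn_lub; auto.
Qed.

End Filters.


Lemma evalUp_var X v n : evalUp X v (Var n) = v n. Proof. reflexivity. Qed.
Lemma evalUp_and X v a b : evalUp X v (And a b) = up_meet X (evalUp X v a) (evalUp X v b). Proof. reflexivity. Qed.
Lemma evalUp_or X v a b : evalUp X v (Or a b) = up_join X (evalUp X v a) (evalUp X v b). Proof. reflexivity. Qed.
Lemma evalUp_imp X v a b : evalUp X v (Imp a b) = up_imp X (evalUp X v a) (evalUp X v b). Proof. reflexivity. Qed.
Lemma evalUp_not X v a : evalUp X v (Not a) = up_neg X (evalUp X v a). Proof. reflexivity. Qed.
Lemma evalUp_bot X v : evalUp X v Bot = up_bot X. Proof. reflexivity. Qed.
Lemma evalUp_top X v : evalUp X v Top = up_top X. Proof. reflexivity. Qed.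
Lemma evalH_var H v n : evalH H v (Var n) = v n. Proof. reflexivity. Qed.
Lemma evalH_and H v a b : evalH H v (And a b) = hmeet H (evalH H v a) (evalH H v b). Proof. reflexivity. Qed.
Lemma evalH_or H v a b : evalH H v (Or a b) = hjoin H (evalH H v a) (evalH H v b). Proof. reflexivity. Qed.
Lemma evalH_imp H v a b : evalH H v (Imp a b) = himp H (evalH H v a) (evalH H v b). Proof. reflexivity. Qed.
Lemma evalH_not H v a : evalH H v (Not a) = hneg H (evalH H v a). Proof. reflexivity. Qed.
Lemma evalH_bot H v : evalH H v Bot = hbot H. Proof. reflexivity. Qed.
Lemma evalH_top H v : evalH H v Top = htop H. Proof. reflexivity. Qed.

Ltac evsimpl := rewrite ?evalUp_var, ?evalUp_and, ?evalUp_or, ?evalUp_imp, ?evalUp_not,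
  ?evalUp_bot, ?evalUp_top, ?evalH_var, ?evalH_and, ?evalH_or, ?evalH_imp, ?evalH_not,
  ?evalH_bot, ?evalH_top in *.

Section Sub.
Variable L : conn -> bool.
Variable H : HA.
Variable S : H -> Prop.
Hypothesis HS : subreduct L H S.
Hypothesis HL : L cAnd = true.
Notation mt := (hmeet H).
Notation jn := (hjoin H).
Notation im := (himp H).
Notation le := (hle H).

Lemma S_ne : exists a, S a. Proof. apply HS. Qed.
Lemma S_mt a b : S a -> S b -> S (mt a b). Proof. apply HS; exact HL. Qed.
Lemma S_jn a b : L cOr = true -> S a -> S b -> S (jn a b). Proof. intro h; apply HS; exact h. Qed.
Lemma S_im a b : L cImp = true -> S a -> S b -> S (im a b). Proof. intro h; apply HS; exact h. Qed.
Lemma S_neg a : L cNot = true -> S a -> S (hneg H a). Proof. intro h; apply HS; exact h. Qed.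
Lemma S_bot : L c0 = true -> S (hbot H). Proof. intro h; apply HS; exact h. Qed.
Lemma S_top : L c1 = true -> S (htop H). Proof. intro h; apply HS; exact h. Qed.

Lemma S_bot_neg : L cNot = true -> S (hbot H).
Proof.
  intro hn. destruct S_ne as [a ha].
  assert (E : mt a (hneg H a) = hbot H) by (apply le_antisym; [apply neg_mp|apply le_bot]).
  rewrite <- E. apply S_mt; [exact ha|apply S_neg; auto].
Qed.

Lemma S_eval f w : in_lang L f = true -> (forall n, S (w n)) -> S (evalH H w f).
Proof.
  intros hf hw. induction f; simpl in hf; evsimpl;
    repeat match goal with h : _ && _ = true |- _ => apply andb_prop in h; destruct h end.
  - apply hw.
  - apply S_mt; auto.
  - apply S_jn; auto.
  - apply S_im; auto.
  - apply S_neg; auto.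
  - apply S_bot; auto.
  - apply S_top; auto.
Qed.

Definition Xd := dual_poset H S.
Definition pt (x : Xd) : H -> Prop := proj1_sig x.
Lemma pt_mi (x : Xd) : meet_irreducible H S (pt x). Proof. exact (proj2_sig x). Qed.
Lemma pt_f (x : Xd) : is_filter H S (pt x). Proof. apply pt_filter, pt_mi. Qed.
Definition mkpt (G : H -> Prop) (h : meet_irreducible H S G) : Xd := exist _ G h.

Lemma pt_up (x : Xd) a b : pt x a -> S b -> le a b -> pt x b.
Proof. intros; eapply (filt_up H S (pt x)); eauto using pt_f. Qed.
Lemma pt_mt (x : Xd) a b : pt x a -> pt x b -> pt x (mt a b).
Proof. intros; eapply (filt_mt H S (pt x)); eauto using pt_f. Qed.
Lemma pt_S (x : Xd) a : pt x a -> S a.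
Proof. intros; eapply (filt_S H S (pt x)); eauto using pt_f. Qed.
Lemma pt_ne (x : Xd) : exists a, pt x a.
Proof. apply (filt_ne H S), pt_f. Qed.
Lemma pt_nolow' (x : Xd) c : (forall s, S s -> le c s) -> ~ pt x c.
Proof. apply (pt_nolow H S), pt_mi. Qed.

Lemma pt_mt_inv (x : Xd) a b : S a -> S b -> pt x (mt a b) -> pt x a /\ pt x b.
Proof. intros ha hb h; split; eapply pt_up; eauto; [apply le_mt_l|apply le_mt_r]. Qed.

Lemma hom f : in_lang L f = true -> forall w, (forall n, S (w n)) ->
  forall x : Xd, evalUp Xd (fun n y => pt y (w n)) f x <-> pt x (evalH H w f).
Proof.
  intros hf w hw. induction f; simpl in hf;
    repeat match goal with h : _ && _ = true |- _ => apply andb_prop in h; destruct h end;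
    repeat match goal with IH : in_lang L ?g = true -> _, h : in_lang L ?g = true |- _ => specialize (IH h) end;
    intro x; evsimpl.
  - reflexivity.
  - unfold up_meet. rewrite IHf1, IHf2.
    split; [intros [h1 h2]; apply pt_mt; auto|intro h; apply pt_mt_inv; auto using S_eval].
  - unfold up_join. rewrite IHf1, IHf2.
    assert (s1 := S_eval f1 w ltac:(assumption) hw). assert (s2 := S_eval f2 w ltac:(assumption) hw).
    split.
    + intros [h|h]; eapply pt_up; eauto using S_jn; [apply le_jn_l|apply le_jn_r].
    + intro h. apply (prime_pt H S S_mt (pt x)); auto using S_jn, pt_mi.
  - unfold up_imp.
    assert (s1 := S_eval f1 w ltac:(assumption) hw). assert (s2 := S_eval f2 w ltac:(assumption) hw).
    set (a := evalH H w f1) in *. set (b := evalH H w f2) in *.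
    assert (sab : S (im a b)) by (apply S_im; auto).
    split.
    + intro hno. apply NNPP; intro nx.
      destruct (extend1 H S (gen H S (pt x) a) b) as [G [hG [hKG nGb]]].
      * apply (gen_filter H S S_mt); auto using pt_f.
      * exact s2.
      * intros [hSg [f0 [hf hl]]]. apply nx. eapply pt_up; [exact hf|exact sab|]. apply imp_adj; exact hl.
      * apply hno. exists (mkpt G hG). split; [|split].
        -- intros c hc. apply hKG. apply gen_in; auto using S_mt, pt_f.
        -- apply IHf1. apply hKG. apply gen_a; auto using S_mt, pt_f.
        -- intro hb. apply IHf2 in hb. exact (nGb hb).
    + intros hx [y [hxy [ha hnb]]]. apply hnb, IHf2. apply IHf1 in ha.
      eapply pt_up; [|exact s2|apply (imp_mp H a b)]. apply pt_mt; [exact ha|apply hxy; exact hx].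
  - unfold up_neg, up_imp, up_bot.
    assert (s1 := S_eval f w ltac:(assumption) hw). set (a := evalH H w f) in *.
    assert (sna : S (hneg H a)) by (apply S_neg; auto).
    split.
    + intro hno. apply NNPP; intro nx.
      destruct (extend1 H S (gen H S (pt x) a) (hneg H a)) as [G [hG [hKG nGb]]].
      * apply (gen_filter H S S_mt); auto using pt_f.
      * exact sna.
      * intros [hSg [f0 [hf hl]]]. apply nx. eapply pt_up; [exact hf|exact sna|].
        rewrite hnegE in *. apply imp_adj. apply imp_adj in hl.
        rewrite <- hmeetA, mt_idem in hl. exact hl.
      * apply hno. exists (mkpt G hG). split; [|split].
        -- intros c hc. apply hKG. apply gen_in; auto using S_mt, pt_f.
        -- apply IHf. apply hKG. apply gen_a; auto using S_mt, pt_f.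
        -- tauto.
    + intros hx [y [hxy [ha _]]]. apply IHf in ha.
      apply (pt_nolow' y (mt a (hneg H a))).
      * intros s _. eapply le_trans; [apply neg_mp|apply le_bot].
      * apply pt_mt; [exact ha|apply hxy; exact hx].
  - unfold up_bot. split; [tauto|]. apply pt_nolow'. intros; apply le_bot.
  - unfold up_top. split; [|tauto]. intros _. destruct (pt_ne x) as [a ha].
    eapply pt_up; [exact ha|apply S_top; auto|apply le_top].
Qed.

Lemma dir_back phis y z : qe_in_lang L phis -> up_sat Xd phis y z -> alg_sat H S phis y z.
Proof.
  intros hL hup w hw hprem.
  apply NNPP; intro nle.
  destruct (separate H S S_mt (w y) (w z) (hw y) (hw z) nle) as [G [hG [hGy nGz]]].
  apply nGz.
  apply (hup (fun n y => pt y (w n))) with (x := mkpt G hG).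
  - intros n a b hab ha. apply hab; exact ha.
  - intros f hf x [h1 h2]. apply (hom f (hL f hf) w hw x) in h1.
    simpl in h2. eapply pt_up; [|apply hw|apply (hprem f hf)]. apply pt_mt; auto.
  - exact hGy.
Qed.

End Sub.


Ltac split_andb := repeat match goal with h : _ && _ = true |- _ => apply andb_prop in h; destruct h end.

Lemma up_mono (X : Poset) (V V' : nat -> X -> Prop) : (forall n x, V n x -> V' n x) ->
  forall f, (positive f = true -> forall x, evalUp X V f x -> evalUp X V' f x) /\
            (negative f = true -> forall x, evalUp X V' f x -> evalUp X V f x).
Proof.
  intros hV f. induction f; simpl; split; intros hp; try discriminate; split_andb;
    repeat match goal with IH : (positive _ = true -> _) /\ _ |- _ => destruct IH end;
    intros x; evsimpl; unfold up_meet, up_join, up_imp, up_neg, up_bot, up_top in *.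
  all: try (intro h; apply hV; exact h).
  all: try (intros [h1 h2]; split; auto; fail).
  all: try (intros [h1|h2]; [left|right]; auto; fail).
  all: try (intros h [y [hxy [h1 h2]]]; apply h; exists y; split; [exact hxy|]; split; auto; fail).
  all: auto.
Qed.

Lemma up_cong (X : Poset) (V V' : nat -> X -> Prop) : (forall n x, V n x <-> V' n x) ->
  forall f x, evalUp X V f x <-> evalUp X V' f x.
Proof.
  intros hV f. induction f; intro x; evsimpl; unfold up_meet, up_join, up_imp, up_neg, up_bot, up_top.
  - apply hV.
  - rewrite IHf1, IHf2; tauto.
  - rewrite IHf1, IHf2; tauto.
  - split; intros h [y [hxy [h1 h2]]]; apply h; exists y; rewrite ?IHf1, ?IHf2 in *;
      [rewrite <- IHf1, <- IHf2 in *|]; tauto.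
  - split; intros h [y [hxy [h1 h2]]]; apply h; exists y; [rewrite <- IHf in h1|rewrite IHf in h1]; tauto.
  - tauto.
  - tauto.
Qed.

Lemma up_upset (X : Poset) (V : nat -> X -> Prop) : (forall n, is_upset X (V n)) ->
  forall f, is_upset X (evalUp X V f).
Proof.
  intros hV f. induction f; intros x y hxy; evsimpl; unfold up_meet, up_join, up_imp, up_neg, up_bot, up_top.
  - apply hV; exact hxy.
  - intros [h1 h2]; split; [eapply IHf1|eapply IHf2]; eauto.
  - intros [h1|h2]; [left; eapply IHf1|right; eapply IHf2]; eauto.
  - intros h [u [hyu hu]]; apply h; exists u; split; [eapply ple_trans; eauto|exact hu].
  - intros h [u [hyu hu]]; apply h; exists u; split; [eapply ple_trans; eauto|exact hu].
  - auto.
  - auto.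
Qed.

Lemma H_mono (H : HA) (w w' : nat -> H) : (forall n, hle H (w n) (w' n)) ->
  forall f, (positive f = true -> hle H (evalH H w f) (evalH H w' f)) /\
            (negative f = true -> hle H (evalH H w' f) (evalH H w f)).
Proof.
  intros hw f. induction f; simpl; split; intros hp; try discriminate; split_andb;
    repeat match goal with IH : (positive _ = true -> _) /\ _ |- _ => destruct IH end; evsimpl.
  all: try (apply hw).
  all: try (apply le_mt_mono; auto; fail).
  all: try (apply le_jn_mono; auto; fail).
  all: try (apply imp_mono; auto; fail).
  all: try (apply neg_mono; auto; fail).
  all: apply le_refl.
Qed.

Lemma evalH_ext (H : HA) (w w' : nat -> H) f :
  (forall n, occurs n f = true -> w n = w' n) -> evalH H w f = evalH H w' f.
Proof.
  induction f; simpl; intro h; evsimpl.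
  - apply h. apply Nat.eqb_refl.
  - rewrite IHf1, IHf2; auto; intros n hn; apply h; rewrite hn; auto using orb_true_r.
  - rewrite IHf1, IHf2; auto; intros n hn; apply h; rewrite hn; auto using orb_true_r.
  - rewrite IHf1, IHf2; auto; intros n hn; apply h; rewrite hn; auto using orb_true_r.
  - rewrite IHf; auto.
  - reflexivity.
  - reflexivity.
Qed.


Section Esakia.
Variable L : conn -> bool.
Variable H : HA.
Variable S : H -> Prop.
Hypothesis HS : subreduct L H S.
Hypothesis HL : L cAnd = true.
Notation mt := (hmeet H).
Notation jn := (hjoin H).
Notation im := (himp H).
Notation le := (hle H).
Notation X := (Xd H S).
Notation pt := (pt H S).

Variable Fp : nat -> H -> Prop.
Hypothesis hFp : forall p, is_filter H S (Fp p).
Variable w0 : nat -> H.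
Hypothesis hw0 : forall p, Fp p (w0 p).

Definition Vc (p : nat) (x : X) : Prop := forall a, Fp p a -> pt x a.
Definition Adm (w : nat -> H) : Prop := forall p, Fp p (w p).
Definition wm (w1 w2 : nat -> H) : nat -> H := fun p => mt (w1 p) (w2 p).
Definition wle (w1 w2 : nat -> H) : Prop := forall p, le (w1 p) (w2 p).

Lemma Adm_S w : Adm w -> forall p, S (w p).
Proof. intros h p. eapply (filt_S H S (Fp p)); eauto. Qed.
Lemma Adm_wm w1 w2 : Adm w1 -> Adm w2 -> Adm (wm w1 w2).
Proof. intros h1 h2 p. apply (filt_mt H S (Fp p)); auto. Qed.
Lemma wle_l w1 w2 : wle (wm w1 w2) w1. Proof. intro p; apply le_mt_l. Qed.
Lemma wle_r w1 w2 : wle (wm w1 w2) w2. Proof. intro p; apply le_mt_r. Qed.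
Lemma wle_trans w1 w2 w3 : wle w1 w2 -> wle w2 w3 -> wle w1 w3.
Proof. intros h1 h2 p; eapply le_trans; eauto. Qed.
Lemma wle_refl w : wle w w. Proof. intro p; apply le_refl. Qed.

Lemma SE f w : in_lang L f = true -> Adm w -> S (evalH H w f).
Proof. intros hf hw. apply (S_eval L H S HS HL); auto. apply Adm_S; auto. Qed.

Lemma pos_le f w w' : positive f = true -> wle w w' -> le (evalH H w f) (evalH H w' f).
Proof. intros hp hw. apply (H_mono H w w' hw f); auto. Qed.
Lemma neg_le f w w' : negative f = true -> wle w w' -> le (evalH H w' f) (evalH H w f).
Proof. intros hp hw. apply (H_mono H w w' hw f); auto. Qed.

Lemma SMT a b : S a -> S b -> S (mt a b). Proof. apply (S_mt L H S HS HL). Qed.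

Ltac getIH a b :=
  match goal with h : positive a = true -> _ |- _ => rename h into P1 end;
  match goal with h : negative a = true -> _ |- _ => rename h into N1 end;
  match goal with h : positive b = true -> _ |- _ => rename h into P2 end;
  match goal with h : negative b = true -> _ |- _ => rename h into N2 end.
Ltac getIH1 a :=
  match goal with h : positive a = true -> _ |- _ => rename h into P1 end;
  match goal with h : negative a = true -> _ |- _ => rename h into N1 end.

Lemma ptup (x : X) a b : pt x a -> S b -> le a b -> pt x b.
Proof. apply pt_up. Qed.

Definition KK (x : X) (g : (nat -> H) -> H) : H -> Prop :=
  fun c => S c /\ exists h w, pt x h /\ Adm w /\ le (mt h (g w)) c.

Lemma KK_filter x f : in_lang L f = true -> positive f = true -> is_filter H S (KK x (fun w => evalH H w f)).
Proof.
  intros hf hp. split; [|split; [|split]].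
  - intros c [h _]; exact h.
  - destruct (pt_ne H S x) as [h hh]. exists (mt h (evalH H w0 f)).
    split; [apply (S_mt L H S HS HL); [eapply pt_S; eauto|apply SE; auto]|].
    exists h, w0; split; [exact hh|split; [exact hw0|apply le_refl]].
  - intros c d [_ [h [w [hh [hw hl]]]]] hd hcd. split; [exact hd|].
    exists h, w; split; [exact hh|split; [exact hw|eapply le_trans; eauto]].
  - intros c d [hc [h1 [w1 [hh1 [hw1 l1]]]]] [hd [h2 [w2 [hh2 [hw2 l2]]]]].
    split; [apply (S_mt L H S HS HL); auto|].
    exists (mt h1 h2), (wm w1 w2). split; [apply pt_mt; auto|]. split; [apply Adm_wm; auto|].
    apply le_mt_glb.
    + eapply le_trans; [|exact l1]. apply le_mt_mono; [apply le_mt_l|apply pos_le; auto using wle_l].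
    + eapply le_trans; [|exact l2]. apply le_mt_mono; [apply le_mt_r|apply pos_le; auto using wle_r].
Qed.

Lemma KK_x x g h : pt x h -> S h -> (forall w, Adm w -> S (g w)) -> KK x g h.
Proof.
  intros hh hS hg. split; [exact hS|]. exists h, w0. split; [exact hh|split; [exact hw0|apply le_mt_l]].
Qed.

Lemma KK_g x g w : Adm w -> S (g w) -> KK x g (g w).
Proof.
  intros hw hS. split; [exact hS|]. destruct (pt_ne H S x) as [h hh].
  exists h, w. split; [exact hh|split; [exact hw|apply le_mt_r]].
Qed.

Lemma esakia f : in_lang L f = true ->
  (positive f = true -> forall x, ~ evalUp X Vc f x -> exists w, Adm w /\ ~ pt x (evalH H w f)) /\
  (negative f = true -> forall x, evalUp X Vc f x -> exists w, Adm w /\ pt x (evalH H w f)).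
Proof.
  induction f; intros hf; simpl in hf; simpl positive; simpl negative; split_andb;
    repeat match goal with IH : in_lang L ?g = true -> _, h : in_lang L ?g = true |- _ => specialize (IH h) end;
    repeat match goal with IH : (positive _ = true -> _) /\ _ |- _ => destruct IH end;
    split; intros hp x; try discriminate; split_andb; evsimpl;
    unfold up_meet, up_join, up_imp, up_neg, up_bot, up_top.
  -
    intro hn. unfold Vc in hn. apply not_all_ex_not in hn. destruct hn as [a hn].
    apply imply_to_and in hn. destruct hn as [ha hna].
    exists (fun q => if Nat.eqb q n then a else w0 q). split.
    + intro q. destruct (Nat.eqb q n) eqn:E; [apply Nat.eqb_eq in E; subst; exact ha|apply hw0].
    + evsimpl. cbv beta. rewrite Nat.eqb_refl. exact hna.
  -
    getIH f1 f2. intro hn. apply not_and_or in hn. destruct hn as [hn|hn].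
    + destruct (P1 ltac:(assumption) x hn) as [w [hw k]]. exists w; split; [exact hw|]. evsimpl.
      intro hm. apply k.
      destruct (pt_mt_inv H S x _ _ (SE f1 w ltac:(assumption) hw) (SE f2 w ltac:(assumption) hw) hm); auto.
    + destruct (P2 ltac:(assumption) x hn) as [w [hw k]]. exists w; split; [exact hw|]. evsimpl.
      intro hm. apply k.
      destruct (pt_mt_inv H S x _ _ (SE f1 w ltac:(assumption) hw) (SE f2 w ltac:(assumption) hw) hm); auto.
  -
    getIH f1 f2. intros [h1 h2].
    destruct (N1 ltac:(assumption) x h1) as [w1 [hw1 k1]].
    destruct (N2 ltac:(assumption) x h2) as [w2 [hw2 k2]].
    exists (wm w1 w2). split; [apply Adm_wm; auto|]. evsimpl. apply pt_mt.
    + eapply ptup; [exact k1|apply SE; auto using Adm_wm|apply neg_le; auto using wle_l].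
    + eapply ptup; [exact k2|apply SE; auto using Adm_wm|apply neg_le; auto using wle_r].
  -
    getIH f1 f2. intro hn. apply not_or_and in hn. destruct hn as [n1 n2].
    destruct (P1 ltac:(assumption) x n1) as [w1 [hw1 k1]].
    destruct (P2 ltac:(assumption) x n2) as [w2 [hw2 k2]].
    assert (hw : Adm (wm w1 w2)) by (apply Adm_wm; auto).
    exists (wm w1 w2). split; [exact hw|]. evsimpl. intro hj.
    assert (sa := SE f1 _ ltac:(assumption) hw). assert (sb := SE f2 _ ltac:(assumption) hw).
    destruct (prime_pt H S SMT (pt x) _ _ (pt_mi H S x) sa sb (S_jn L H S HS _ _ ltac:(assumption) sa sb) hj) as [k|k].
    + apply k1. eapply ptup; [exact k|apply SE; auto|apply pos_le; auto using wle_l].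
    + apply k2. eapply ptup; [exact k|apply SE; auto|apply pos_le; auto using wle_r].
  -
    getIH f1 f2. intros [h|h].
    + destruct (N1 ltac:(assumption) x h) as [w [hw k]]. exists w; split; [exact hw|]. evsimpl.
      eapply ptup; [exact k|apply (S_jn L H S HS); auto; apply SE; auto|apply le_jn_l].
    + destruct (N2 ltac:(assumption) x h) as [w [hw k]]. exists w; split; [exact hw|]. evsimpl.
      eapply ptup; [exact k|apply (S_jn L H S HS); auto; apply SE; auto|apply le_jn_r].
  -
    getIH f1 f2. intro hn. apply NNPP in hn. destruct hn as [y [hxy [ha hnb]]].
    destruct (N1 ltac:(assumption) y ha) as [w1 [hw1 k1]].
    destruct (P2 ltac:(assumption) y hnb) as [w2 [hw2 k2]].
    assert (hw : Adm (wm w1 w2)) by (apply Adm_wm; auto).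
    exists (wm w1 w2). split; [exact hw|]. evsimpl. intro hi.
    assert (sa := SE f1 _ ltac:(assumption) hw). assert (sb := SE f2 _ ltac:(assumption) hw).
    assert (ka : pt y (evalH H (wm w1 w2) f1))
      by (eapply ptup; [exact k1|exact sa|apply neg_le; auto using wle_l]).
    apply k2. eapply ptup; [|apply SE; auto|apply pos_le; [assumption|apply wle_r]].
    eapply ptup; [apply pt_mt; [exact ka|exact (hxy _ hi)]|exact sb|apply imp_mp].
  -
    getIH f1 f2. intro hI.
    assert (hKf := KK_filter x f1 ltac:(assumption) ltac:(assumption)).
    set (g := fun w => evalH H w f1) in *.
    destruct (classic (exists c, KK x g c /\ (S c /\ exists w, Adm w /\ le c (evalH H w f2))))
      as [[c [[_ [h [w1 [hh [hw1 l1]]]]] [_ [w2 [hw2 l2]]]]]|hno].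
    + assert (hw : Adm (wm w1 w2)) by (apply Adm_wm; auto).
      exists (wm w1 w2). split; [exact hw|]. evsimpl.
      eapply ptup; [exact hh|apply (S_im L H S HS); auto; apply SE; auto|]. apply imp_adj.
      eapply le_trans; [apply le_mt_mono; [apply le_refl|apply (pos_le f1 _ w1); auto using wle_l]|].
      eapply le_trans; [exact l1|]. eapply le_trans; [exact l2|]. apply neg_le; auto using wle_r.
    + destruct (extend H S (KK x g) (fun d => S d /\ exists w, Adm w /\ le d (evalH H w f2)) hKf)
        as [G [hG [hKG hGD]]].
      * exists (evalH H w0 f2). split; [apply SE; auto|exists w0; split; [exact hw0|apply le_refl]].
      * intros d [hd _]; exact hd.
      * intros d1 d2 [_ [w1 [hw1 l1]]] [_ [w2 [hw2 l2]]]. exists (evalH H (wm w1 w2) f2).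
        split; [split; [apply SE; auto using Adm_wm|exists (wm w1 w2); split; [apply Adm_wm; auto|apply le_refl]]|].
        split.
        -- eapply le_trans; [exact l1|apply neg_le; auto using wle_l].
        -- eapply le_trans; [exact l2|apply neg_le; auto using wle_r].
      * intros d hd hk. apply hno. exists d. split; [exact hk|exact hd].
      * pose (y := mkpt H S G hG).
        assert (hxy : ple X x y).
        { intros a ha. apply hKG. apply KK_x; [exact ha|eapply pt_S; eauto|intros w hw; apply SE; auto]. }
        assert (hA : evalUp X Vc f1 y).
        { apply NNPP; intro hna. destruct (P1 ltac:(assumption) y hna) as [w [hw k]].
          apply k. apply hKG. apply (KK_g x g w hw). apply SE; auto. }
        assert (hB : evalUp X Vc f2 y).
        { apply NNPP; intro hnb. apply hI. exists y. tauto. }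
        destruct (N2 ltac:(assumption) y hB) as [w [hw k]].
        exfalso. apply (hGD (evalH H w f2)); [split; [apply SE; auto|exists w; split; [exact hw|apply le_refl]]|exact k].
  -
    getIH1 f. intro hn. unfold up_imp in hn. apply NNPP in hn. destruct hn as [y [hxy [ha _]]].
    destruct (N1 ltac:(assumption) y ha) as [w [hw k]]. exists w; split; [exact hw|]. evsimpl.
    intro hn. apply (pt_nolow' H S y (mt (evalH H w f) (hneg H (evalH H w f)))).
    + intros s _. eapply le_trans; [apply neg_mp|apply le_bot].
    + apply pt_mt; [exact k|exact (hxy _ hn)].
  -
    getIH1 f. intro hI. unfold up_imp in hI.
    assert (hbS : S (hbot H)) by (apply (S_bot_neg L H S HS HL); assumption).
    assert (hKf := KK_filter x f ltac:(assumption) ltac:(assumption)).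
    set (g := fun w => evalH H w f) in *.
    destruct (classic (exists c, KK x g c /\ (S c /\ le c (hbot H))))
      as [[c [[_ [h [w1 [hh [hw1 l1]]]]] [_ l2]]]|hno].
    + exists w1. split; [exact hw1|]. evsimpl.
      eapply ptup; [exact hh|apply (S_neg L H S HS); auto; apply SE; auto|].
      rewrite hnegE. apply imp_adj. eapply le_trans; [exact l1|exact l2].
    + destruct (extend H S (KK x g) (fun d => S d /\ le d (hbot H)) hKf)
        as [G [hG [hKG hGD]]].
      * exists (hbot H). split; [exact hbS|apply le_refl].
      * intros d [hd _]; exact hd.
      * intros d1 d2 [_ l1] [_ l2]. exists (hbot H). split; [split; [exact hbS|apply le_refl]|split; auto].
      * intros d hd hk. apply hno. exists d. split; [exact hk|exact hd].
      * pose (y := mkpt H S G hG).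
        assert (hxy : ple X x y).
        { intros a ha. apply hKG. apply KK_x; [exact ha|eapply pt_S; eauto|intros w hw; apply SE; auto]. }
        assert (hA : evalUp X Vc f y).
        { apply NNPP; intro hna. destruct (P1 ltac:(assumption) y hna) as [w [hw k]].
          apply k. apply hKG. apply (KK_g x g w hw). apply SE; auto. }
        exfalso. apply hI. exists y. split; [exact hxy|split; [exact hA|tauto]].
  -
    intros _. exists w0. split; [exact hw0|]. evsimpl. apply pt_nolow'. intros; apply le_bot.
  - intros [].
  - intro h; exfalso; apply h; exact I.
  - intros _. exists w0. split; [exact hw0|]. evsimpl. destruct (pt_ne H S x) as [a ha].
    eapply ptup; [exact ha|apply (S_top L H S HS); assumption|apply le_top].
Qed.

Lemma ante_Q a : sahl_ante a -> in_lang L a = true -> forall y, evalUp X Vc a y ->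
  exists w, Adm w /\ forall w', Adm w' -> wle w' w -> pt y (evalH H w' a).
Proof.
  intros ha. induction ha; intros hl y hy; simpl in hl; split_andb; evsimpl.
  - exists w0. split; [exact hw0|]. intros w' hw' _. evsimpl. apply hy. apply hw'.
  - destruct (proj2 (esakia f hl) H0 y hy) as [w [hw k]]. exists w. split; [exact hw|].
    intros w' hw' hle. eapply ptup; [exact k|apply SE; auto|apply neg_le; auto].
  - destruct hy.
  - exists w0. split; [exact hw0|]. intros w' hw' _. evsimpl. destruct (pt_ne H S y) as [c hc].
    eapply ptup; [exact hc|apply (S_top L H S HS); assumption|apply le_top].
  - destruct hy as [h1 h2].
    destruct (IHha1 ltac:(assumption) y h1) as [w1 [hw1 k1]].
    destruct (IHha2 ltac:(assumption) y h2) as [w2 [hw2 k2]].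
    exists (wm w1 w2). split; [apply Adm_wm; auto|]. intros w' hw' hle. evsimpl.
    apply pt_mt; [apply k1|apply k2]; auto; eapply wle_trans; eauto using wle_l, wle_r.
  - destruct hy as [h1|h2].
    + destruct (IHha1 ltac:(assumption) y h1) as [w1 [hw1 k1]]. exists w1; split; [exact hw1|].
      intros w' hw' hle. evsimpl. apply (ptup y (evalH H w' a)); [apply k1; auto|apply (S_jn L H S HS); auto; apply SE; auto|apply le_jn_l].
    + destruct (IHha2 ltac:(assumption) y h2) as [w1 [hw1 k1]]. exists w1; split; [exact hw1|].
      intros w' hw' hle. evsimpl. apply (ptup y (evalH H w' b)); [apply k1; auto|apply (S_jn L H S HS); auto; apply SE; auto|apply le_jn_r].
Qed.

Lemma impl_R f : sahl_impl f -> in_lang L f = true -> forall x, ~ evalUp X Vc f x ->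
  exists w, Adm w /\ forall w', Adm w' -> wle w' w -> ~ pt x (evalH H w' f).
Proof.
  intros hs hl x hn. destruct hs as [hp|[[a [-> ha]]|[a [b [-> [ha hb]]]]]].
  - destruct (proj1 (esakia f hl) hp x hn) as [w [hw k]]. exists w; split; [exact hw|].
    intros w' hw' hle hk. apply k. eapply ptup; [exact hk|apply SE; auto|apply pos_le; auto].
  - simpl in hl. split_andb. evsimpl. unfold up_neg, up_imp, up_bot in hn. apply NNPP in hn.
    destruct hn as [y [hxy [hy _]]].
    destruct (ante_Q a ha ltac:(assumption) y hy) as [w [hw k]]. exists w; split; [exact hw|].
    intros w' hw' hle hk. evsimpl.
    apply (pt_nolow' H S y (mt (evalH H w' a) (hneg H (evalH H w' a)))).
    + intros s _. eapply le_trans; [apply neg_mp|apply le_bot].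
    + apply pt_mt; [apply k; auto|exact (hxy _ hk)].
  - simpl in hl. split_andb. evsimpl. unfold up_imp in hn. apply NNPP in hn.
    destruct hn as [y [hxy [hy hny]]].
    destruct (ante_Q a ha ltac:(assumption) y hy) as [w1 [hw1 k1]].
    destruct (proj1 (esakia b ltac:(assumption)) hb y hny) as [w2 [hw2 k2]].
    exists (wm w1 w2). split; [apply Adm_wm; auto|]. intros w' hw' hle hk. evsimpl.
    apply k2. eapply ptup; [|apply SE; auto|apply pos_le; [exact hb|eapply wle_trans; [exact hle|apply wle_r]]].
    eapply ptup; [apply pt_mt; [apply k1; [exact hw'|eapply wle_trans; [exact hle|apply wle_l]]|exact (hxy _ hk)]|apply SE; auto|apply imp_mp].
Qed.

Lemma body_R f : sahl_body f -> in_lang L f = true -> forall x, ~ evalUp X Vc f x ->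
  exists w, Adm w /\ forall w', Adm w' -> wle w' w -> ~ pt x (evalH H w' f).
Proof.
  intros hb. induction hb; intros hl x hn; simpl in hl; split_andb; evsimpl.
  - apply impl_R; auto.
  - unfold up_meet in hn. apply not_and_or in hn. destruct hn as [hn|hn].
    + destruct (IHhb1 ltac:(assumption) x hn) as [w [hw k]]. exists w; split; [exact hw|].
      intros w' hw' hle hm. evsimpl. apply (k w' hw' hle).
      apply (pt_mt_inv H S x _ _ (SE a w' ltac:(assumption) hw') (SE b w' ltac:(assumption) hw') hm).
    + destruct (IHhb2 ltac:(assumption) x hn) as [w [hw k]]. exists w; split; [exact hw|].
      intros w' hw' hle hm. evsimpl. apply (k w' hw' hle).
      apply (pt_mt_inv H S x _ _ (SE a w' ltac:(assumption) hw') (SE b w' ltac:(assumption) hw') hm).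
  - unfold up_join in hn. apply not_or_and in hn. destruct hn as [n1 n2].
    destruct (IHhb1 ltac:(assumption) x n1) as [w1 [hw1 k1]].
    destruct (IHhb2 ltac:(assumption) x n2) as [w2 [hw2 k2]].
    exists (wm w1 w2). split; [apply Adm_wm; auto|]. intros w' hw' hle hj. evsimpl.
    assert (sa := SE a w' ltac:(assumption) hw'). assert (sb := SE b w' ltac:(assumption) hw').
    destruct (prime_pt H S SMT (pt x) _ _ (pt_mi H S x) sa sb (S_jn L H S HS _ _ ltac:(assumption) sa sb) hj) as [k|k].
    + apply (k1 w' hw'); [eapply wle_trans; [exact hle|apply wle_l]|exact k].
    + apply (k2 w' hw'); [eapply wle_trans; [exact hle|apply wle_r]|exact k].
Qed.

Lemma list_R (phis : list fm) x : (forall f, In f phis -> sahl_body f /\ in_lang L f = true /\ ~ evalUp X Vc f x) ->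
  exists w, Adm w /\ forall w', Adm w' -> wle w' w -> forall f, In f phis -> ~ pt x (evalH H w' f).
Proof.
  induction phis as [|f phis IH]; intros h.
  - exists w0. split; [exact hw0|]. intros w' _ _ f [].
  - destruct IH as [w1 [hw1 k1]]. { intros g hg; apply h; right; exact hg. }
    destruct (h f (or_introl eq_refl)) as [hb [hl hn]].
    destruct (body_R f hb hl x hn) as [w2 [hw2 k2]].
    exists (wm w1 w2). split; [apply Adm_wm; auto|]. intros w' hw' hle g [<-|hg].
    + apply k2; auto. eapply wle_trans; [exact hle|apply wle_r].
    + apply k1; auto. eapply wle_trans; [exact hle|apply wle_l].
Qed.

End Esakia.


Lemma collect {A B : Type} (Ls : list A) (P : A -> Prop) (Q : A -> B -> Prop) :
  (forall G, In G Ls -> P G -> exists c, Q G c) ->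
  exists cs, (forall G, In G Ls -> P G -> exists c, In c cs /\ Q G c) /\ (forall c, In c cs -> exists G, Q G c).
Proof.
  induction Ls as [|G Ls IH]; intro h.
  - exists []. split; [intros G []|intros c []].
  - destruct IH as [cs [h1 h2]]. { intros G' hG' hP; apply h; [right|]; auto. }
    destruct (classic (P G)) as [hP|hnP].
    + destruct (h G (or_introl eq_refl) hP) as [c hc]. exists (c :: cs). split.
      * intros G' [<-|hG'] hP'. -- exists c; split; [left|]; auto.
        -- destruct (h1 G' hG' hP') as [c' [hc' q]]. exists c'; split; [right|]; auto.
      * intros c' [<-|hc']; [exists G; exact hc|apply h2; exact hc'].
    + exists cs. split; [|exact h2]. intros G' [<-|hG'] hP'; [contradiction|apply h1; auto].
Qed.

Definition negset (X : Poset) (U : X -> Prop) (x : X) : Prop := ~ exists y, ple X x y /\ U y.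
Definition nnset (X : Poset) (U : X -> Prop) (x : X) : Prop := forall y, ple X x y -> ~ negset X U y.

Lemma negset_cong (X : Poset) (U U' : X -> Prop) : (forall x, U x <-> U' x) -> forall x, negset X U x <-> negset X U' x.
Proof. intros h x. unfold negset. split; intros hn [y [hxy hy]]; apply hn; exists y; split; auto; apply h; auto. Qed.

Lemma nnset_cong (X : Poset) (U U' : X -> Prop) : (forall x, negset X U x <-> negset X U' x) -> forall x, nnset X U x <-> nnset X U' x.
Proof. intros h x. unfold nnset. split; intros hn y hxy hy; apply (hn y hxy); apply h; exact hy. Qed.

Lemma negset_and (X : Poset) (U W : X -> Prop) : is_upset X U -> is_upset X W ->
  forall x, negset X (fun y => U y /\ W y) x <-> negset X (fun y => nnset X U y /\ nnset X W y) x.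
Proof.
  intros hU hW x. unfold negset, nnset. split.
  - intros h [y [hxy [n1 n2]]].
    specialize (n1 y (ple_refl X y)). apply NNPP in n1. destruct n1 as [z [hyz hz]].
    specialize (n2 z hyz). apply NNPP in n2. destruct n2 as [z' [hzz' hz']].
    apply h. exists z'. split; [eapply ple_trans; [exact hxy|eapply ple_trans; eauto]|].
    split; [eapply hU; eauto|exact hz'].
  - intros h [y [hxy [hu hw]]]. apply h. exists y. split; [exact hxy|split].
    + intros z hyz hn. apply hn. exists z. split; [apply ple_refl|eapply hU; eauto].
    + intros z hyz hn. apply hn. exists z. split; [apply ple_refl|eapply hW; eauto].
Qed.

Fixpoint noIO (f : fm) : bool :=
  match f with
  | Var _ => true
  | And a b => noIO a && noIO b
  | Or _ _ => false
  | Imp _ _ => false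
  | Not a => noIO a
  | Bot | Top => true
  end.

Lemma in_lang_noIO L f : L cImp = false -> L cOr = false -> in_lang L f = true -> noIO f = true.
Proof.
  intros h1 h2. induction f; simpl; intro h; split_andb; auto; try congruence.
  rewrite IHf1, IHf2; auto.
Qed.

Lemma noIO_inv (X : Poset) (V V' : nat -> X -> Prop) : (forall n, is_upset X (V n)) -> (forall n, is_upset X (V' n)) ->
  (forall p x, negset X (V p) x <-> negset X (V' p) x) ->
  forall f, noIO f = true -> forall x, negset X (evalUp X V f) x <-> negset X (evalUp X V' f) x.
Proof.
  intros hV hV' hp f. induction f; simpl; intro hn; try discriminate; split_andb; intro x; evsimpl.
  - apply hp.
  - unfold up_meet.
    rewrite (negset_and X _ _ (up_upset X V hV f1) (up_upset X V hV f2)).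
    rewrite (negset_and X _ _ (up_upset X V' hV' f1) (up_upset X V' hV' f2)).
    apply negset_cong. intro y.
    rewrite (nnset_cong X _ _ (IHf1 ltac:(assumption)) y), (nnset_cong X _ _ (IHf2 ltac:(assumption)) y).
    tauto.
  - apply negset_cong. intro y. unfold up_neg, up_imp, up_bot.
    assert (E := IHf hn y). unfold negset in E.
    split; intro h; intros [z [hyz [hz _]]].
    + apply (proj1 E); [intros [z' [h1 h2]]; apply h; exists z'; tauto|exists z; tauto].
    + apply (proj2 E); [intros [z' [h1 h2]]; apply h; exists z'; tauto|exists z; tauto].
  - apply negset_cong; tauto.
  - apply negset_cong; tauto.
Qed.

Section Min.
Variable L : conn -> bool.
Variable H : HA.
Variable S : H -> Prop.
Hypothesis HS : subreduct L H S.
Hypothesis HL : L cAnd = true.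
Notation mt := (hmeet H).
Notation jn := (hjoin H).
Notation im := (himp H).
Notation le := (hle H).
Notation X := (Xd H S).
Notation pt := (pt H S).
Variable v : nat -> X -> Prop.
Hypothesis hv : forall n, is_upset X (v n).
Variable x0 : X.

Lemma SMT' a b : S a -> S b -> S (mt a b). Proof. apply (S_mt L H S HS HL). Qed.

Definition V1 (Ls : list X) (p : nat) (x : X) : Prop := exists G, In G Ls /\ v p G /\ ple X G x.

Lemma V1_v Ls p x : V1 Ls p x -> v p x.
Proof. intros [G [_ [hG hGx]]]. eapply hv; eauto. Qed.

Lemma V1_upset Ls p : is_upset X (V1 Ls p).
Proof. intros x y hxy [G [h1 [h2 h3]]]. exists G; split; [auto|split; [auto|eapply ple_trans; eauto]]. Qed.

Lemma ante_V1 a : sahl_ante a -> forall Ls G, In G Ls -> evalUp X v a G -> evalUp X (V1 Ls) a G.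
Proof.
  intros ha. induction ha; intros Ls G hG h; evsimpl; unfold up_meet, up_join, up_top, up_bot in *.
  - exists G. split; [exact hG|split; [exact h|apply ple_refl]].
  - apply (proj2 (up_mono X (V1 Ls) v (V1_v Ls) f) H0 G h).
  - destruct h.
  - exact I.
  - destruct h; split; eauto.
  - destruct h; [left|right]; eauto.
Qed.

Lemma impl_A f : sahl_impl f -> ~ evalUp X v f x0 ->
  exists Ls0, (forall G, In G Ls0 -> ple X x0 G) /\ forall Ls, incl Ls0 Ls -> ~ evalUp X (V1 Ls) f x0.
Proof.
  intros hs hn. destruct hs as [hp|[[a [-> ha]]|[a [b [-> [ha hb]]]]]].
  - exists []. split; [intros G []|]. intros Ls _ h. apply hn.
    apply (proj1 (up_mono X (V1 Ls) v (V1_v Ls) f) hp x0 h).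
  - evsimpl. unfold up_neg, up_imp, up_bot in *. apply NNPP in hn. destruct hn as [y [hxy [hy _]]].
    exists [y]. split; [intros G [<-|[]]; exact hxy|].
    intros Ls hincl h. apply h. exists y. split; [exact hxy|split; [|tauto]].
    apply ante_V1; auto. apply hincl; left; auto.
  - evsimpl. unfold up_imp in *. apply NNPP in hn. destruct hn as [y [hxy [hy hny]]].
    exists [y]. split; [intros G [<-|[]]; exact hxy|].
    intros Ls hincl h. apply h. exists y. split; [exact hxy|split].
    + apply ante_V1; auto. apply hincl; left; auto.
    + intro hb'. apply hny. apply (proj1 (up_mono X (V1 Ls) v (V1_v Ls) b) hb y hb').
Qed.

Lemma body_A f : sahl_body f -> ~ evalUp X v f x0 ->
  exists Ls0, (forall G, In G Ls0 -> ple X x0 G) /\ forall Ls, incl Ls0 Ls -> ~ evalUp X (V1 Ls) f x0.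
Proof.
  intros hb. induction hb; intros hn; evsimpl; unfold up_meet, up_join in *.
  - apply impl_A; auto.
  - apply not_and_or in hn. destruct hn as [hn|hn].
    + destruct (IHhb1 hn) as [Ls0 [h1 h2]]. exists Ls0. split; [exact h1|]. intros Ls hi [k _]. apply (h2 Ls hi k).
    + destruct (IHhb2 hn) as [Ls0 [h1 h2]]. exists Ls0. split; [exact h1|]. intros Ls hi [_ k]. apply (h2 Ls hi k).
  - apply not_or_and in hn. destruct hn as [n1 n2].
    destruct (IHhb1 n1) as [Ls1 [h1 h2]]. destruct (IHhb2 n2) as [Ls2 [g1 g2]].
    exists (Ls1 ++ Ls2). split.
    + intros G hG. apply in_app_or in hG. destruct hG; auto.
    + intros Ls hi [k|k].
      * apply (h2 Ls); [intros G hG; apply hi, in_or_app; left; auto|exact k].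
      * apply (g2 Ls); [intros G hG; apply hi, in_or_app; right; auto|exact k].
Qed.

Lemma list_A (phis : list fm) : (forall f, In f phis -> sahl_body f /\ ~ evalUp X v f x0) ->
  exists Ls, (forall G, In G Ls -> ple X x0 G) /\ forall f, In f phis -> ~ evalUp X (V1 Ls) f x0.
Proof.
  intro h.
  assert (K : exists Ls0, (forall G, In G Ls0 -> ple X x0 G) /\
            forall Ls, incl Ls0 Ls -> forall f, In f phis -> ~ evalUp X (V1 Ls) f x0).
  { induction phis as [|f phis IH].
    - exists []. split; [intros G []|intros Ls _ f []].
    - destruct IH as [Ls1 [h1 h2]]. { intros g hg; apply h; right; auto. }
      destruct (h f (or_introl eq_refl)) as [hb hn].
      destruct (body_A f hb hn) as [Ls2 [g1 g2]].
      exists (Ls1 ++ Ls2). split.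
      + intros G hG. apply in_app_or in hG. destruct hG; auto.
      + intros Ls hi g [<-|hg].
        * apply g2. intros G hG; apply hi, in_or_app; right; auto.
        * apply h2; auto. intros G hG; apply hi, in_or_app; left; auto. }
  destruct K as [Ls0 [h1 h2]]. exists Ls0. split; [exact h1|]. apply h2. intros G hG; exact hG.
Qed.

Variable Ls : list X.
Hypothesis hLs : forall G, In G Ls -> ple X x0 G.

Definition Fp (p : nat) : H -> Prop := fun a => S a /\ forall G, In G Ls -> v p G -> pt G a.
Notation V2 := (Vc H S Fp).

Lemma Fp_filter p : is_filter H S (Fp p).
Proof.
  split; [|split; [|split]].
  - intros a [h _]; exact h.
  - destruct (pt_ne H S x0) as [a ha]. exists a. split; [eapply pt_S; eauto|]. intros G hG _. apply (hLs G hG); exact ha.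
  - intros a b [ha h] hb hab. split; [exact hb|]. intros G hG hvG. eapply pt_up; eauto.
  - intros a b [ha h1] [hb h2]. split; [apply SMT'; auto|]. intros G hG hvG. apply pt_mt; auto.
Qed.

Lemma Fp_x0 p a : pt x0 a -> Fp p a.
Proof. intro ha. split; [eapply pt_S; eauto|]. intros G hG _. apply (hLs G hG); exact ha. Qed.

Lemma V1_V2 p x : V1 Ls p x -> V2 p x.
Proof. intros [G [hG [hvG hGx]]] a [_ h]. apply hGx. apply h; auto. Qed.

Lemma V2_upset p : is_upset X (V2 p).
Proof. intros x y hxy h a ha. apply hxy, h, ha. Qed.

Lemma collect_pts p x : ~ V1 Ls p x ->
  exists cs, (forall G, In G Ls -> v p G -> exists c, In c cs /\ pt G c /\ ~ pt x c) /\
             (forall c, In c cs -> S c /\ ~ pt x c).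
Proof.
  intro hn.
  destruct (collect Ls (fun G => v p G) (fun G c => pt G c /\ ~ pt x c)) as [cs [h1 h2]].
  - intros G hG hvG. apply NNPP; intro hno. apply hn. exists G. split; [exact hG|split; [exact hvG|]].
    intros a ha. apply NNPP; intro hna. apply hno. exists a; split; auto.
  - exists cs. split; [exact h1|]. intros c hc. destruct (h2 c hc) as [G [k1 k2]]. split; [eapply pt_S; eauto|exact k2].
Qed.

Lemma V2_x0 p : V2 p x0 -> V1 Ls p x0.
Proof.
  intro hV. apply NNPP; intro hn.
  destruct (collect_pts p x0 hn) as [cs [h1 h2]].
  destruct (ML_list H S SMT' (pt x0) cs (pt_mi H S x0) h2) as [f [z [hf [hz [nz hle]]]]].
  apply nz. apply hV. split; [exact hz|]. intros G hG hvG.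
  destruct (h1 G hG hvG) as [c [hc [hGc _]]].
  eapply pt_up; [apply pt_mt; [exact hGc|apply (hLs G hG); exact hf]|exact hz|apply hle; exact hc].
Qed.

Lemma foldjn_S cs z : L cOr = true -> S z -> (forall c, In c cs -> S c) -> S (fold_right jn z cs).
Proof.
  intros ho hz. induction cs as [|c cs IH]; intro h; simpl; [exact hz|].
  apply (S_jn L H S HS); auto. apply h; left; auto. apply IH; intros; apply h; right; auto.
Qed.

Lemma foldjn_ge cs z c : In c cs -> le c (fold_right jn z cs).
Proof.
  induction cs as [|d cs IH]; simpl; [intros []|]. intros [<-|hc].
  - apply le_jn_l.
  - eapply le_trans; [apply IH; auto|apply le_jn_r].
Qed.

Lemma foldjn_mt cs z f : (forall c, In c cs -> le (mt c f) z) -> le (mt (fold_right jn z cs) f) z.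
Proof.
  induction cs as [|d cs IH]; simpl; intro h; [apply le_mt_l|].
  eapply le_trans; [apply distr|]. apply le_jn_lub; [apply h; left; auto|apply IH; intros; apply h; right; auto].
Qed.

Lemma V2_V1 p x : (L cImp = true \/ L cOr = true) -> V2 p x -> V1 Ls p x.
Proof.
  intros hL hV. apply NNPP; intro hn.
  destruct (collect_pts p x hn) as [cs [h1 h2]].
  destruct (ML_list H S SMT' (pt x) cs (pt_mi H S x) h2) as [f [z [hf [hz [nz hle]]]]].
  assert (sf : S f) by (eapply pt_S; eauto).
  destruct hL as [hI|hO].
  - assert (st : S (im f z)) by (apply (S_im L H S HS); auto).
    apply nz. eapply pt_up; [apply pt_mt; [exact hf|apply hV]|exact hz|apply imp_mp].
    split; [exact st|]. intros G hG hvG. destruct (h1 G hG hvG) as [c [hc [hGc _]]].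
    eapply pt_up; [exact hGc|exact st|]. apply imp_adj. apply hle; exact hc.
  - assert (st : S (fold_right jn z cs)) by (apply foldjn_S; auto; intros c hc; apply h2; auto).
    apply nz. eapply pt_up; [apply pt_mt; [apply hV|exact hf]|exact hz|apply foldjn_mt; exact hle].
    split; [exact st|]. intros G hG hvG. destruct (h1 G hG hvG) as [c [hc [hGc _]]].
    eapply pt_up; [exact hGc|exact st|]. apply foldjn_ge; exact hc.
Qed.

Definition gen2 (F1 F2 : H -> Prop) : H -> Prop :=
  fun c => S c /\ exists h g, F1 h /\ F2 g /\ le (mt h g) c.

Lemma gen2_filter F1 F2 : is_filter H S F1 -> is_filter H S F2 -> is_filter H S (gen2 F1 F2).
Proof.
  intros h1 h2. unfold gen2. split; [|split; [|split]].
  - intros c [h _]; exact h.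
  - destruct (filt_ne H S F1 h1) as [a ha]. destruct (filt_ne H S F2 h2) as [b hb].
    exists (mt a b). split; [apply SMT'; [apply (filt_S H S F1 a h1 ha)|apply (filt_S H S F2 b h2 hb)]|]. exists a, b. split; auto. split; auto. apply le_refl.
  - intros a b [_ [h [g [hh [hg l]]]]] hb hab. split; [exact hb|]. exists h, g. split; auto. split; auto. eapply le_trans; eauto.
  - intros a b [ha [h [g [hh [hg l]]]]] [hb [h' [g' [hh' [hg' l']]]]]. split; [apply SMT'; auto|].
    exists (mt h h'), (mt g g'). split; [apply (filt_mt H S F1); auto|]. split; [apply (filt_mt H S F2); auto|].
    apply le_mt_glb.
    + eapply le_trans; [|exact l]. apply le_mt_mono; [apply le_mt_l|apply le_mt_l].
    + eapply le_trans; [|exact l']. apply le_mt_mono; [apply le_mt_r|apply le_mt_r].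
Qed.

Lemma foldmt_pt (y : X) h0 hs : pt y h0 -> (forall h, In h hs -> pt y h) -> pt y (fold_right mt h0 hs).
Proof.
  intros h0y. induction hs as [|h hs IH]; simpl; intro k; [exact h0y|].
  apply pt_mt; [apply k; left; auto|apply IH; intros; apply k; right; auto].
Qed.

Lemma foldmt_le h0 hs h : In h hs -> le (fold_right mt h0 hs) h.
Proof.
  induction hs as [|d hs IH]; simpl; [intros []|]. intros [<-|hh].
  - apply le_mt_l.
  - eapply le_trans; [apply le_mt_r|apply IH; auto].
Qed.

Lemma negV1_negV2 p x : L cNot = true -> negset X (V1 Ls p) x -> negset X (V2 p) x.
Proof.
  intros hN hn [y [hxy hV]].
  assert (hbS : S (hbot H)) by (apply (S_bot_neg L H S HS HL); auto).
  assert (K : forall G, In G Ls -> v p G -> exists h, pt y h /\ exists g, pt G g /\ le (mt h g) (hbot H)).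
  { intros G hG hvG. apply NNPP; intro hno.
    destruct (extend1 H S (gen2 (pt y) (pt G)) (hbot H)) as [G' [hG' [hK nb]]].
    - apply gen2_filter; apply pt_f.
    - exact hbS.
    - intros [_ [h [g [hh [hg l]]]]]. apply hno. exists h. split; [exact hh|exists g; split; auto].
    - apply hn. exists (mkpt H S G' hG'). split.
      + eapply ple_trans; [exact hxy|]. intros a ha. apply hK. destruct (pt_ne H S G) as [g hg].
        split; [eapply pt_S; eauto|]. exists a, g. split; [exact ha|split; [exact hg|apply le_mt_l]].
      + exists G. split; [exact hG|split; [exact hvG|]]. intros a ha. apply hK.
        destruct (pt_ne H S y) as [h hh].
        split; [eapply pt_S; eauto|]. exists h, a. split; [exact hh|split; [exact ha|apply le_mt_r]]. }
  destruct (collect Ls (fun G => v p G) (fun G h => pt y h /\ exists g, pt G g /\ le (mt h g) (hbot H)) K)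
    as [hs [h1 h2]].
  destruct (pt_ne H S y) as [h0 hh0].
  set (hst := fold_right mt h0 hs).
  assert (hsty : pt y hst) by (apply foldmt_pt; auto; intros h hh; destruct (h2 h hh) as [G [k _]]; exact k).
  assert (sh : S hst) by (eapply pt_S; eauto).
  assert (st : S (hneg H hst)) by (apply (S_neg L H S HS); auto).
  apply (pt_nolow' H S y (mt hst (hneg H hst))).
  - intros s _. eapply le_trans; [apply neg_mp|apply le_bot].
  - apply pt_mt; [exact hsty|]. apply hV. split; [exact st|]. intros G hG hvG.
    destruct (h1 G hG hvG) as [h [hh [_ [g [hg l]]]]].
    eapply pt_up; [exact hg|exact st|]. rewrite hnegE. apply imp_adj.
    eapply le_trans; [|exact l]. rewrite hmeetC. apply le_mt_mono; [apply foldmt_le; auto|apply le_refl].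
Qed.

Lemma transfer_noIO f : noIO f = true -> in_lang L f = true ->
  (forall y, evalUp X (V1 Ls) f y -> evalUp X V2 f y) /\ (evalUp X V2 f x0 -> evalUp X (V1 Ls) f x0).
Proof.
  induction f; simpl; intros hn hl; try discriminate; split_andb;
    repeat match goal with IH : noIO ?g = true -> in_lang L ?g = true -> _, h1 : noIO ?g = true, h2 : in_lang L ?g = true |- _ => specialize (IH h1 h2) end;
    evsimpl; unfold up_meet, up_top, up_bot.
  - split; [apply V1_V2|apply V2_x0].
  - destruct IHf1, IHf2. split; [intros y [a b]|intros [a b]]; split; auto.
  - assert (E : forall y, evalUp X (V1 Ls) (Not f) y <-> evalUp X V2 (Not f) y).
    { intro y. evsimpl.
      assert (E2 := noIO_inv X (V1 Ls) V2 (V1_upset Ls) V2_upset).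
      assert (E3 : forall p x, negset X (V1 Ls p) x <-> negset X (V2 p) x).
      { intros p x. split; [apply negV1_negV2; auto|].
        intros h [z [hxz hz]]. apply h. exists z. split; [exact hxz|apply V1_V2; exact hz]. }
      specialize (E2 E3 f ltac:(assumption) y).
      unfold up_neg, up_imp, up_bot. unfold negset in E2.
      split; intro h; intros [z [hyz [hz _]]].
      + apply (proj1 E2); [intros [z' [k1 k2]]; apply h; exists z'; tauto|exists z; tauto].
      + apply (proj2 E2); [intros [z' [k1 k2]]; apply h; exists z'; tauto|exists z; tauto]. }
    evsimpl. split; [intros y; apply E|apply E].
  - tauto.
  - tauto.
Qed.

Lemma transfer f : in_lang L f = true -> ~ evalUp X (V1 Ls) f x0 -> ~ evalUp X V2 f x0.
Proof.
  intros hl hn h. destruct (L cImp || L cOr) eqn:E.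
  - apply hn. apply (up_cong X (V1 Ls) V2); auto. intros p x. split; [apply V1_V2|apply V2_V1].
    apply orb_true_iff in E. exact E.
  - apply orb_false_iff in E. destruct E as [e1 e2].
    apply hn. apply (transfer_noIO f (in_lang_noIO L f e1 e2 hl) hl). exact h.
Qed.

End Min.


Lemma dir_fwd L H S (HS : subreduct L H S) (HL : L cAnd = true) phis y z :
  sahlqvist_qe phis y z -> qe_in_lang L phis -> alg_sat H S phis y z -> up_sat (Xd H S) phis y z.
Proof.
  intros [hlen [hyz [hocc hbody]]] hLp hA v hv hprem x0 hy.
  apply NNPP; intro hz.
  assert (hn : forall f, In f phis -> sahl_body f /\ ~ evalUp (Xd H S) v f x0).
  { intros f hf. split; [apply hbody; exact hf|]. intro he. apply hz. apply (hprem f hf x0). split; auto. }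
  destruct (list_A H S v hv x0 phis hn) as [Ls [hLs hn1]].
  destruct (pt_ne H S x0) as [c0 hc0].
  assert (hw0 : forall p, Fp H S v Ls p ((fun _ => c0) p)) by (intro p; apply (Fp_x0 H S v x0 Ls hLs); exact hc0).
  destruct (list_R L H S HS HL (Fp H S v Ls) (Fp_filter L H S HS HL v x0 Ls hLs) (fun _ => c0) hw0 phis x0)
    as [w [hw k]].
  { intros f hf. split; [apply hbody; exact hf|]. split; [apply hLp; exact hf|].
    apply (transfer L H S HS HL v x0 Ls hLs f (hLp f hf)). apply hn1; exact hf. }
  specialize (k w hw (wle_refl H w)).
  assert (hwS := Adm_S H S (Fp H S v Ls) (Fp_filter L H S HS HL v x0 Ls hLs) w hw).
  destruct (ML_list H S (S_mt L H S HS HL) (pt H S x0) (map (evalH H w) phis) (pt_mi H S x0)) as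
    [f0 [zz [hf0 [hzz [nzz hle]]]]].
  { intros c hc. apply in_map_iff in hc. destruct hc as [f [<- hf]].
    split; [apply (S_eval L H S HS HL); auto|apply k; exact hf]. }
  pose (w' := fun n => if Nat.eqb n y then f0 else if Nat.eqb n z then zz else w n).
  assert (hw'y : w' y = f0) by (unfold w'; rewrite Nat.eqb_refl; reflexivity).
  assert (hw'z : w' z = zz).
  { unfold w'. destruct (Nat.eqb z y) eqn:E; [apply Nat.eqb_eq in E; congruence|rewrite Nat.eqb_refl; reflexivity]. }
  assert (hsf0 : S f0) by (eapply pt_S; eauto).
  assert (hA' := hA w').
  rewrite hw'y, hw'z in hA'.
  apply nzz. eapply pt_up; [exact hf0|exact hzz|]. apply hA'.
  - intro n. unfold w'. destruct (Nat.eqb n y); [exact hsf0|]. destruct (Nat.eqb n z); [exact hzz|apply hwS].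
  - intros f hf. rewrite (evalH_ext H w' w f).
    + apply hle. apply in_map; exact hf.
    + intros n hn'. unfold w'. destruct (hocc f hf) as [oy oz].
      destruct (Nat.eqb n y) eqn:E1; [apply Nat.eqb_eq in E1; rewrite E1 in hn'; congruence|].
      destruct (Nat.eqb n z) eqn:E2; [apply Nat.eqb_eq in E2; rewrite E2 in hn'; congruence|reflexivity].
Qed.

Theorem corollary5p12
  (tr : list fm -> nat -> nat -> fo)
  (Htr : forall phis y z, sahlqvist_qe phis y z ->
     fo_sentence (tr phis y z) /\
     forall X : Poset, up_sat X phis y z <-> fo_sat X (tr phis y z))
  (L : conn -> bool) (HL : L cAnd = true)
  (phis : list fm) (y z : nat)
  (HPhi : sahlqvist_qe phis y z) (HPhiL : qe_in_lang L phis)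
  (H : HA) (S : H -> Prop) (HS : subreduct L H S) :
  alg_sat H S phis y z <-> fo_sat (dual_poset H S) (tr phis y z).
Proof.
  destruct (Htr phis y z HPhi) as [_ E].
  rewrite <- (E (dual_poset H S)).
  split.
  - apply (dir_fwd L H S HS HL phis y z HPhi HPhiL).
  - apply (dir_back L H S HS HL phis y z HPhiL).
Qed.
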